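(* Let $\beta\in\mathcal{A}$ and $\lambda\in N_\beta$ with $\lambda_\beta=-1$ and $\sigma_X(-\mathcal{A}\lambda)<\infty$. Then the dual cone of $C_X(\mathcal{A},\lambda)$ (in $\mathbb{R}^{\mathcal{A}}$ with the standard inner product) is \[C_X(\mathcal{A},\lambda)^*=\Big\{v\in\mathbb{R}^{\mathcal{A}}_+:\ \exp(\sigma_X(-\mathcal{A}\lambda))\prod_{\alpha\in\lambda^+}v_\alpha^{\lambda_\alpha}\ge v_\beta\Big\}.\]
   Context: $X\subset\mathbb{R}^n$ is a nonempty closed convex set and $\mathcal{A}\subset\mathbb{R}^n$ a nonempty finite set. $\mathbb{R}^{\mathcal{A}}$ denotes real vectors indexed by $\mathcal{A}$. $\mathcal{A}\nu=\sum_\alpha\alpha\nu_\alpha$. $\sigma_X(y)=\sup\{y^Tx:x\in X\}$. $N_\beta=\{\nu\in\mathbb{R}^{\mathcal{A}}:\nu_\alpha\ge0\ \forall\alpha\neq\beta,\ \sum_\alpha\nu_\alpha=0\}$. $\lambda^+=\{\alpha:\lambda_\alpha>0\}$. For $\lambda\in N_\beta$ with $\lambda_\beta=-1$ and $\sigma_X(-\mathcal{A}\lambda)<\infty$, the $\lambda$-witnessed AGE cone is $C_X(\mathcal{A},\lambda)=\{c\in\mathbb{R}^{\mathcal{A}}: c_\alpha\ge0\ \forall\alpha\neq\beta,\ \prod_{\alpha\in\lambda^+}(c_\alpha/\lambda_\alpha)^{\lambda_\alpha}\ge -c_\beta\exp(\sigma_X(-\mathcal{A}\lambda))\}$. The dual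 cone of $K$ is $K^*=\{v:v^Tc\ge0\ \forall c\in K\}$. *)

(* Defs.v *)
From HB Require Import structures.
From mathcomp Require Import all_boot all_order all_algebra.
From mathcomp Require Import all_classical all_reals all_analysis.
Set Implicit Arguments. Unset Strict Implicit. Unset Printing Implicit Defensive.
Import Order.TTheory GRing.Theory Num.Theory.
Import numFieldNormedType.Exports.
Local Open Scope classical_set_scope.
Local Open Scope ring_scope.

Definition dotv (R : realType) (n : nat) (y x : 'rV[R]_n) : R :=
  \sum_(k < n) y 0 k * x 0 k.

Definition support_fun (R : realType) (n : nat) (X : set 'rV[R]_n)
    (y : 'rV[R]_n) : \bar R :=
  ereal_sup [set (dotv y x)%:E | x in X].

(* The finite set A of exponents is the (injective) image of a : I -> R^n;
   vectors of R^A are functions I -> R.  A nu = sum_alpha alpha nu_alpha. *)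
Definition Amul (R : realType) (n : nat) (I : finType) (a : I -> 'rV[R]_n)
    (nu : I -> R) : 'rV[R]_n :=
  \sum_(i : I) nu i *: a i.

Definition N_beta (R : realType) (I : finType) (beta : I) : set (I -> R) :=
  [set nu | (forall i, i != beta -> 0 <= nu i) /\ \sum_(i : I) nu i = 0].

(* lambda-witnessed AGE cone C_X(A, lambda); the real powers use powR
   (0 `^ t = 0 for t > 0).  exp(sigma) is expR of the (finite) real value. *)
Definition AGE_cone (R : realType) (n : nat) (X : set 'rV[R]_n) (I : finType)
    (a : I -> 'rV[R]_n) (beta : I) (lam : I -> R) : set (I -> R) :=
  [set c | (forall i, i != beta -> 0 <= c i) /\
     \prod_(i | 0 < lam i) ((c i / lam i) `^ (lam i))
       >= - c beta * expR (fine (support_fun X (- Amul a lam)))].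

Definition dual_cone (R : realType) (I : finType) (K : set (I -> R)) :
    set (I -> R) :=
  [set v | forall c, K c -> 0 <= \sum_(i : I) v i * c i].

(* Main.v *)
Require Import Defs.
From HB Require Import structures.
From mathcomp Require Import all_boot all_order all_algebra.
From mathcomp Require Import all_classical all_reals all_analysis.
Import Order.TTheory GRing.Theory Num.Theory.
Import numFieldNormedType.Exports.
Local Open Scope classical_set_scope.
Local Open Scope ring_scope.
From mathcomp Require Import lra.

Section H.
Variable R : realType.
Lemma prod_powR_exp (I : finType) (P : pred I) (w y : I -> R) :
  (forall i, P i -> 0 < y i) ->
  \prod_(i | P i) y i `^ w i = expR (\sum_(i | P i) w i * ln (y i)).
Proof.
move=> yp; rewrite expR_sum; apply: eq_bigr => i Pi.
by rewrite /powR gt_eqF ?yp.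
Qed.

Lemma amgm (I : finType) (P : pred I) (w y : I -> R) :
  (forall i, P i -> 0 < w i) -> \sum_(i | P i) w i = 1 ->
  (forall i, P i -> 0 <= y i) ->
  \prod_(i | P i) y i `^ w i <= \sum_(i | P i) w i * y i.
Proof.
move=> w0 w1 y0.
case: (pselect (exists i, P i /\ y i = 0)) => [[i [Pi yi0]]|Hn].
  rewrite (bigD1 i Pi) /= yi0 powR0 ?gt_eqF ?w0 // mul0r.
  by apply: sumr_ge0 => j Pj; apply: mulr_ge0; [apply: ltW; apply: w0 | apply: y0].
have yp : forall i, P i -> 0 < y i.
  move=> i Pi; rewrite lt_neqAle y0 // andbT; apply/negP => /eqP h.
  by apply: Hn; exists i; split; rewrite // -h.
rewrite prod_powR_exp //; set m := \sum_(i | P i) _.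
have H : forall i, P i -> expR m * (1 + (ln (y i) - m)) <= y i.
  move=> i Pi.
  have {2}-> : y i = expR m * expR (ln (y i) - m).
    by rewrite -expRD addrC subrK lnK // posrE yp.
  by rewrite ler_wpM2l ?expR_ge0 // expR_ge1Dx.
have E1 : \sum_(i | P i) w i * (1 + (ln (y i) - m)) = 1.
  under eq_bigr do rewrite mulrDr mulr1 mulrBr.
  rewrite big_split /= sumrB w1 -/m -mulr_suml w1 mul1r.
  by rewrite addrA addrK.
apply: (@le_trans _ _ (\sum_(i | P i) w i * (expR m * (1 + (ln (y i) - m))))).
  under eq_bigr do rewrite mulrCA.
  by rewrite -mulr_sumr E1 mulr1.
apply: ler_sum => i Pi; apply: ler_wpM2l; [apply: ltW; exact: w0 | exact: H].
Qed.

Lemma main_dual (I : finType) (beta : I) (lam : I -> R) (S : R) :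
  N_beta beta lam -> lam beta = -1 ->
  dual_cone [set c : I -> R | (forall i, i != beta -> 0 <= c i) /\
     \prod_(i | 0 < lam i) ((c i / lam i) `^ (lam i)) >= - c beta * expR S]
  = [set v | (forall i, 0 <= v i) /\
     expR S * \prod_(i | 0 < lam i) (v i `^ (lam i)) >= v beta].
Proof.
move=> [lam_ge0 lam_sum] lamb.
have notb : forall i, 0 < lam i -> i != beta.
  by move=> i h; apply/negP => /eqP e; move: h; rewrite e lamb ltr0N1.
have F1 : \sum_(i | 0 < lam i) lam i = 1.
  move: lam_sum; rewrite (bigID (fun i => 0 < lam i)) /=.
  rewrite [X in _ + X](bigD1 beta) /=; last by rewrite lamb ltr0N1.
  rewrite [X in _ + (_ + X)]big1 ?lamb.
    by move=> h; lra.
  move=> i /andP[h1 h2]; have := lam_ge0 i h2.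
  by rewrite le_eqVlt (negbTE h1) orbF => /eqP <-.
rewrite eqEsubset; split => v; first last.
  move=> [vge0 Hvb] c [cge0 Pc]; rewrite /=.
  have cgeb : forall i, 0 < lam i -> 0 <= c i by move=> i /notb; exact: cge0.
  case: (lerP 0 (c beta)) => cb.
    apply: sumr_ge0 => i _; apply: mulr_ge0 => //.
    by case: (eqVneq i beta) => [->|/cge0].
  rewrite (bigD1 beta) //=.
  have H1 : \sum_(i | 0 < lam i) v i * c i <= \sum_(i | i != beta) v i * c i.
    rewrite [X in _ <= X](bigID (fun i => 0 < lam i)) /=.
    rewrite [X in _ <= X + _](eq_bigl (fun i => 0 < lam i)); last first.
      by move=> i; case h: (0 < lam i); rewrite ?andbF ?andbT ?notb.
    rewrite lerDl; apply: sumr_ge0 => i /andP[h _].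
    by apply: mulr_ge0 => //; exact: cge0.
  have H2 : - (v beta * c beta) <= \sum_(i | 0 < lam i) v i * c i.
    have E1 : \sum_(i | 0 < lam i) v i * c i =
        \sum_(i | 0 < lam i) lam i * (v i * c i / lam i).
      by apply: eq_bigr => i h; rewrite [RHS]mulrC divfK // gt_eqF.
    rewrite E1.
    apply: (@le_trans _ _ (\prod_(i | 0 < lam i) (v i * c i / lam i) `^ lam i)); last first.
      apply: amgm; [by [] | exact: F1 | move=> i h].
      by rewrite divr_ge0 ?mulr_ge0 ?cgeb // ltW.
    have E2 : \prod_(i | 0 < lam i) (v i * c i / lam i) `^ lam i =
       \prod_(i | 0 < lam i) v i `^ lam i *
       \prod_(i | 0 < lam i) (c i / lam i) `^ lam i.
      rewrite -big_split /=; apply: eq_bigr => i h.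
      by rewrite -mulrA powRM // divr_ge0 ?cgeb // ltW.
    rewrite E2.
    apply: (@le_trans _ _ (\prod_(i | 0 < lam i) v i `^ lam i * (- c beta * expR S))).
      have hc : 0 <= - c beta by rewrite oppr_ge0 ltW.
      have := ler_wpM2l hc Hvb; set P := \prod_(i | _) _.
      move=> h; nra.
    apply: ler_wpM2l => //; apply: prodr_ge0 => i _; exact: powR_ge0.
  lra.
move=> Hv.
have vge0 : forall i, 0 <= v i.
  move=> i.
  have Hs : \sum_j v j * (j == i)%:R = v i.
    rewrite (bigD1 i) //= eqxx mulr1 big1 ?addr0 //.
    by move=> j /negbTE ->; rewrite mulr0.
  rewrite -Hs; apply: Hv; split.
    by move=> j _; case: (j == i).
  apply: (@le_trans _ _ 0).
    by rewrite mulNr oppr_le0 mulr_ge0 ?expR_ge0 ?ler0n.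
  by apply: prodr_ge0 => j _; exact: powR_ge0.
split => //.
have K : forall t : I -> R, \sum_(i | 0 < lam i) lam i * t i = S ->
    v beta <= \sum_(i | 0 < lam i) lam i * v i * expR (t i).
  move=> t Ht.
  pose c := fun i => - (i == beta)%:R +
                     (if 0 < lam i then lam i * expR (t i) else 0).
  have Hdot : \sum_i v i * c i =
      - v beta + \sum_(i | 0 < lam i) lam i * v i * expR (t i).
    rewrite /c; under eq_bigr do rewrite mulrDr.
    rewrite big_split /=; congr (_ + _).
      rewrite (bigD1 beta) //= eqxx mulrN1 big1 ?addr0 //.
      by move=> j /negbTE ->; rewrite oppr0 mulr0.
    rewrite [RHS]big_mkcond /=; apply: eq_bigr => i _.
    by case: ifP => _; rewrite ?mulr0 // mulrCA mulrA.
  suff : 0 <= \sum_i v i * c i by rewrite Hdot; lra.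
  apply: Hv; split.
    move=> i /negbTE ne; rewrite /c ne oppr0 add0r.
    by case: ifP => // h; rewrite mulr_ge0 ?expR_ge0 // ltW.
  have -> : \prod_(i | 0 < lam i) (c i / lam i) `^ lam i = expR S.
    rewrite -Ht expR_sum; apply: eq_bigr => i h.
    rewrite /c h (negbTE (notb i h)) oppr0 add0r mulrC mulKf ?gt_eqF //.
    by rewrite -expRM mulrC.
  by rewrite /c eqxx lamb ltr0N1 addr0 opprK mul1r.
case: (pselect (exists i0, 0 < lam i0 /\ v i0 = 0)) => [[i0 [hi0 vi0]]|Hn].
  have -> : \prod_(i | 0 < lam i) v i `^ lam i = 0.
    by rewrite (bigD1 i0) //= vi0 powR0 ?gt_eqF // mul0r.
  rewrite mulr0.
  set Kc := \sum_(i | 0 < lam i) lam i * v i.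
  have Kge : 0 <= Kc.
    by apply: sumr_ge0 => i h; rewrite mulr_ge0 // ltW.
  have F2 : \sum_(j | (0 < lam j) && (j != i0)) lam j = 1 - lam i0.
    by move: F1; rewrite (bigD1 i0) //=; lra.
  have Hu : forall u, v beta <= Kc * expR u.
    move=> u.
    pose t := fun j => if j == i0 then (S - u * (1 - lam i0)) / lam i0 else u.
    apply: le_trans (K t _) _.
      rewrite (bigD1 i0) //= /t eqxx mulrC divfK ?gt_eqF //.
      rewrite (eq_bigr (fun j => lam j * u)); last first.
        by move=> j /andP[_ /negbTE ->].
      by rewrite -mulr_suml F2 [(1 - _) * u]mulrC subrK.
    rewrite /Kc mulr_suml; apply: ler_sum => j hj.
    case: (eqVneq j i0) => [->|ne]; rewrite /t ?eqxx ?(negbTE ne) ?vi0 ?mulr0 ?mul0r //.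
  rewrite leNgt; apply/negP => vb.
  have hK1 : 0 < Kc + 1 by lra.
  have := Hu (ln (v beta / (Kc + 1))).
  rewrite lnK ?posrE ?divr_gt0 //.
  set q := v beta / (Kc + 1).
  have hq : q * (Kc + 1) = v beta by rewrite divfK // gt_eqF.
  have q0 : 0 < q by rewrite divr_gt0.
  move=> h; nra.
have vp : forall i, 0 < lam i -> 0 < v i.
  move=> i h; rewrite lt_neqAle vge0 andbT; apply/negP => /eqP e.
  by apply: Hn; exists i; split; rewrite // -e.
set m := \sum_(i | 0 < lam i) lam i * ln (v i).
rewrite prod_powR_exp // -/m -expRD.
apply: le_trans (K (fun i => S + m - ln (v i)) _) _.
  under eq_bigr do rewrite mulrBr.
  by rewrite sumrB -mulr_suml F1 mul1r -/m addrK.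
rewrite (eq_bigr (fun i => lam i * expR (S + m))); last first.
  move=> i h; rewrite expRB lnK ?posrE ?vp // -mulrA [v i * _]mulrC divfK //.
  by rewrite gt_eqF ?vp.
by rewrite -mulr_suml F1 mul1r.
Qed.
End H.

Theorem proposition4p7 (R : realType) (n : nat) (X : set 'rV[R]_n)
    (I : finType) (a : I -> 'rV[R]_n) (beta : I) (lam : I -> R) :
  X !=set0 -> closed X -> convex_set (X : set (convex_lmodType 'rV[R]_n)) ->
  injective a ->
  N_beta beta lam -> lam beta = -1 ->
  (support_fun X (- Amul a lam) < +oo)%E ->
  dual_cone (AGE_cone X a beta lam) =
  [set v | (forall i, 0 <= v i) /\
     expR (fine (support_fun X (- Amul a lam)))
       * \prod_(i | 0 < lam i) (v i `^ (lam i)) >= v beta].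
Proof.
move=> _ _ _ _ hN hb _.
exact: (@main_dual R I beta lam (fine (support_fun X (- Amul a lam))) hN hb).
Qed.
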